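(* Let $\Gamma$ be a torsion-free word hyperbolic group and $\langle w \rangle$ a maximal cyclic subgroup of $\Gamma$. Suppose that $\rho:\Gamma \to \mathsf{GL}(d, \mathbb{R})$ is a projective Anosov representation. Then there exists $h \in \mathsf{GL}(d, \mathbb{R})$ such that for every $g \in \Gamma \smallsetminus \langle w \rangle$, the $(1,1)$, $(1,d)$, $(d,1)$ and $(d,d)$ entries of the matrix $h\rho(g)h^{-1}$ are non-zero.
   Context: Fix a word length $|\cdot|$ on $\Gamma$. For a matrix $A$, $\sigma_1(A)\ge\sigma_2(A)\ge\dots$ denote its singular values. A representation $\rho:\Gamma\to\mathsf{GL}(d,\mathbb R)$ is projective Anosov if there are constants $C,a>0$ with $\sigma_1(\rho(\gamma))/\sigma_2(\rho(\gamma))\ge Ce^{a|\gamma|}$ for all $\gamma\in\Gamma$. A cyclic subgroup is maximal if it is not contained in a strictly larger cyclic subgroup. *)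

(* Defs.v *)
From HB Require Import structures.
From mathcomp Require Import all_boot all_order all_algebra.
From mathcomp Require Import all_classical all_reals all_analysis.
From Stdlib Require Import List.
Set Implicit Arguments. Unset Strict Implicit. Unset Printing Implicit Defensive.
Import Order.TTheory GRing.Theory Num.Theory.
Local Open Scope ring_scope.

Record group_axioms (G : Type) (mul : G -> G -> G) (one : G) (inv : G -> G)
  : Prop := GroupAxioms {
  gmulA : forall x y z, mul x (mul y z) = mul (mul x y) z;
  gmul1l : forall x, mul one x = x;
  gmul1r : forall x, mul x one = x;
  gmulVl : forall x, mul (inv x) x = one;
  gmulVr : forall x, mul x (inv x) = one }.

Definition gpow (G : Type) (mul : G -> G -> G) (one : G) (g : G) (n : nat) : G :=
  iter n (mul g) one.

Definition gzpow (G : Type) (mul : G -> G -> G) (one : G) (inv : G -> G)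
  (g : G) (k : int) : G :=
  match k with
  | Posz n => gpow mul one g n
  | Negz n => inv (gpow mul one g n.+1)
  end.

Definition torsion_free (G : Type) (mul : G -> G -> G) (one : G) : Prop :=
  forall g, g <> one -> forall n : nat, (0 < n)%N -> gpow mul one g n <> one.

Definition in_cyclic (G : Type) (mul : G -> G -> G) (one : G) (inv : G -> G)
  (w g : G) : Prop := exists k : int, g = gzpow mul one inv w k.

Definition maximal_cyclic (G : Type) (mul : G -> G -> G) (one : G)
  (inv : G -> G) (w : G) : Prop :=
  forall u, (forall g, in_cyclic mul one inv w g -> in_cyclic mul one inv u g) ->
            (forall g, in_cyclic mul one inv u g -> in_cyclic mul one inv w g).

Definition letter (G : Type) (inv : G -> G) (S : list G) (x : G) : Prop :=
  In x S \/ In (inv x) S.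

Definition represents (G : Type) (mul : G -> G -> G) (one : G) (inv : G -> G)
  (S : list G) (g : G) (n : nat) : Prop :=
  exists l : list G, length l = n /\ Forall (letter inv S) l /\ foldr mul one l = g.

Definition generates (G : Type) (mul : G -> G -> G) (one : G) (inv : G -> G)
  (S : list G) : Prop :=
  forall g, exists n, represents mul one inv S g n.

Definition is_wordlen (G : Type) (mul : G -> G -> G) (one : G) (inv : G -> G)
  (S : list G) (g : G) (n : nat) : Prop :=
  represents mul one inv S g n /\
  forall m, represents mul one inv S g m -> (n <= m)%N.

(** Word hyperbolicity: the word metric d(x,y) = |x^{-1} y| satisfies
    Gromov's four-point condition for some delta. *)
Definition word_hyperbolic (G : Type) (mul : G -> G -> G) (one : G)
  (inv : G -> G) (S : list G) : Prop :=
  exists delta : nat, forall x y z w (nxy nzw nxz nyw nxw nyz : nat),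
    is_wordlen mul one inv S (mul (inv x) y) nxy ->
    is_wordlen mul one inv S (mul (inv z) w) nzw ->
    is_wordlen mul one inv S (mul (inv x) z) nxz ->
    is_wordlen mul one inv S (mul (inv y) w) nyw ->
    is_wordlen mul one inv S (mul (inv x) w) nxw ->
    is_wordlen mul one inv S (mul (inv y) z) nyz ->
    (nxy + nzw <= maxn (nxz + nyw) (nxw + nyz) + delta.*2)%N.

(** * Singular values.  [singular_values_sq A s] : s is the list of the
    eigenvalues of A^T A, with multiplicity, in nonincreasing order; the
    singular values are sigma_i(A) = sqrt (s`_i) (indices from 0). *)
Definition singular_values_sq (R : realType) (d : nat) (A : 'M[R]_d)
  (s : list R) : Prop :=
  [/\ size s = d, sorted (fun x y => y <= x) s &
      char_poly (A^T *m A) = \prod_(x <- s) ('X - x%:P)].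

Definition representation (G : Type) (mul : G -> G -> G) (one : G)
  (R : realType) (d : nat) (rho : G -> 'M[R]_d) : Prop :=
  (forall g, rho g \in unitmx) /\ rho one = 1%:M /\
  forall g h, rho (mul g h) = rho g *m rho h.

Definition projective_anosov (G : Type) (mul : G -> G -> G) (one : G)
  (inv : G -> G) (S : list G) (R : realType) (d : nat) (rho : G -> 'M[R]_d)
  : Prop :=
  exists C a : R, 0 < C /\ 0 < a /\
    forall g n, is_wordlen mul one inv S g n ->
      exists s, singular_values_sq (rho g) s /\
        C * expR (a * n%:R) <= Num.sqrt (s`_0) / Num.sqrt (s`_1).

(* Main.v *)
Require Import Defs.
From HB Require Import structures.
From mathcomp Require Import all_boot all_order all_algebra.
From mathcomp Require Import all_classical all_reals all_analysis.
From mathcomp Require Import ring lra zify.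
Import Order.TTheory GRing.Theory Num.Theory.
Local Open Scope ring_scope.


Local Open Scope classical_set_scope.

Lemma roots_finite (R : realType) (p : {poly R}) : p != 0 ->
  finite_set [set t | p.[t] = 0].
Proof.
move=> p0; apply: contrapT => /(infinite_set_fset (size p)) [B BA szB].
have : all (root p) (finmap.enum_fset B).
  by apply/allP => x xB; apply/rootP; apply: BA.
move=> /(max_poly_roots p0) /(_ (finmap.fset_uniq _)).
by rewrite ltnNge szB.
Qed.

Lemma avoid_roots (R : realType) (p : nat -> {poly R}) :
  (forall k, p k != 0) -> exists t, forall k, (p k).[t] != 0.
Proof.
move=> p0; apply: contrapT => H.
have cT : countable [set: R].
  apply: (@sub_countable _ _ _ (\bigcup_(k in [set: nat]) [set t | (p k).[t] = 0])).
  - apply: subset_card_le => t _; apply: contrapT => Ht; apply: H; exists t => k; apply/eqP => pk.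
    by apply: Ht; exists k.
  - apply: bigcup_countable => // k _; exact/finite_set_countable/roots_finite.
have c01 : countable [set` `[(0:R), 1]%R].
  exact: (sub_countable (subset_card_le (@subsetT _ _)) cT).
have := countable_lebesgue_measure0 c01.
rewrite lebesgue_measure_itv /=.
idtac.
rewrite lte_fin ltr01 oppr0 adde0 => /eqP; rewrite eqe; exact/negP/oner_neq0.
Qed.

Local Close Scope classical_set_scope.
Section Mx.
Variable R : realType.
Variable n : nat.
Local Notation M_ := ('M[R]_n.+1).

Definition tv (i j : 'I_n.+1) (t : R) : M_ := 1 + t *: delta_mx i j.
Definition ctv i j t (M : M_) := tv i j t * M * tv i j (- t).

Lemma EE i j : i != j -> delta_mx i j * delta_mx i j = 0 :> M_.
Proof. by move=> ij; rewrite -mulmxE mul_delta_mx_cond eq_sym (negbTE ij) mulr0n. Qed.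

Lemma tvK i j t : i != j -> tv i j t * tv i j (- t) = 1.
Proof.
move=> ij; rewrite /tv mulrDl !mulrDr !mul1r mulr1 -scalerAl -scalerAr EE // !scaler0 addr0.
by rewrite scaleNr subrK.
Qed.

Lemma tvK' i j t : i != j -> tv i j (- t) * tv i j t = 1.
Proof. by move=> ij; rewrite -{2}(opprK t) tvK. Qed.

Lemma EM_entry i j (M : M_) a b : (delta_mx i j * M) a b = (a == i)%:R * M j b.
Proof.
rewrite -mulmxE mxE (bigD1 j) //= mxE eqxx andbT big1 ?addr0 // => k kj.
by rewrite mxE (negbTE kj) andbF mul0r.
Qed.

Lemma ME_entry i j (M : M_) a b : (M * delta_mx i j) a b = M a i * (b == j)%:R.
Proof.
rewrite -mulmxE mxE (bigD1 i) //= mxE eqxx /= big1 ?addr0 // => k ki.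
by rewrite mxE (negbTE ki) /= mulr0.
Qed.

Lemma ctv_entry i j t (M : M_) a b : i != j ->
  ctv i j t M a b = M a b + ((a == i)%:R * M j b - M a i * (b == j)%:R) * t
     + (- ((a == i)%:R * M j i * (b == j)%:R)) * t ^+ 2.
Proof.
move=> ij; rewrite /ctv /tv.
rewrite !mulrDl !mulrDr !mul1r !mulr1 -!scalerAl -!scalerAr.
have eD : forall A B : M_, (A + B) a b = A a b + B a b by move=> A B; rewrite mxE.
have eZ : forall (k : R) (A : M_), (k *: A) a b = k * A a b by move=> k A; rewrite mxE.
rewrite !eD !eZ ME_entry EM_entry ME_entry EM_entry.
rewrite expr2; ring.
Qed.

Definition qp (c0 c1 c2 : R) : {poly R} := c0%:P + c1 *: 'X + c2 *: 'X^2.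

Lemma qpE c0 c1 c2 t : (qp c0 c1 c2).[t] = c0 + c1 * t + c2 * t ^+ 2.
Proof. by rewrite /qp !hornerE. Qed.

Lemma qp_neq0 c0 c1 c2 : [|| c0 != 0, c1 != 0 | c2 != 0] -> qp c0 c1 c2 != 0.
Proof.
move=> H; apply/eqP => q0.
have e k : (qp c0 c1 c2)`_k = 0 by rewrite q0 coef0.
move: (e 0%N) (e 1%N) (e 2%N); rewrite /qp !coefE /= !(mulr0, mulr1, addr0, add0r) => e0 e1 e2.
by move: H; rewrite e0 e1 e2 !eqxx.
Qed.

Definition good_step (P Q : M_ -> Prop) i j :=
  forall M, P M -> exists p : {poly R}, p != 0 /\ forall t, p.[t] != 0 -> Q (ctv i j t M).

Lemma entry_nz i j (M : M_) a b : i != j ->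
  [|| M a b != 0, ((a == i)%:R * M j b - M a i * (b == j)%:R) != 0
    | (- ((a == i)%:R * M j i * (b == j)%:R)) != 0] ->
  exists p : {poly R}, p != 0 /\ forall t, p.[t] != 0 -> ctv i j t M a b != 0.
Proof.
move=> ij H; exists (qp (M a b) ((a == i)%:R * M j b - M a i * (b == j)%:R)
  (- ((a == i)%:R * M j i * (b == j)%:R))); split; first by apply: qp_neq0; exact H.
by move=> t; rewrite qpE ctv_entry.
Qed.

Lemma and_nz i j (M : M_) (Q1 Q2 : M_ -> Prop) :
  (exists p : {poly R}, p != 0 /\ forall t, p.[t] != 0 -> Q1 (ctv i j t M)) ->
  (exists p : {poly R}, p != 0 /\ forall t, p.[t] != 0 -> Q2 (ctv i j t M)) ->
  exists p : {poly R}, p != 0 /\ forall t, p.[t] != 0 -> Q1 (ctv i j t M) /\ Q2 (ctv i j t M).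
Proof.
move=> [p1 [p10 H1]] [p2 [p20 H2]]; exists (p1 * p2); split; first by rewrite mulf_neq0.
by move=> t; rewrite hornerM mulf_eq0 negb_or => /andP[/H1 ? /H2 ?].
Qed.

Definition Good (F : nat -> M_) (D : nat -> Prop) (P : M_ -> Prop) :=
  exists h : M_, h \is a GRing.unit /\ forall k, D k -> P (h * F k * h^-1).

Lemma tv_unit i j t : i != j -> tv i j t \is a GRing.unit.
Proof. by move=> ij; apply/unitrP; exists (tv i j (- t)); rewrite tvK // tvK'. Qed.

Lemma tv_inv i j t : i != j -> (tv i j t)^-1 = tv i j (- t).
Proof.
move=> ij; rewrite -[RHS]mul1r -(mulVr (tv_unit i j t ij)) -mulrA tvK // mulr1 //.
Qed.

Lemma Good_step F D P Q i j : i != j -> good_step P Q i j -> Good F D P -> Good F D Q.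
Proof.
move=> ij st [h [hu Hh]].
have : forall k, exists p : {poly R}, p != 0 /\ (D k -> forall t, p.[t] != 0 -> Q (ctv i j t (h * F k * h^-1))).
  move=> k; case: (pselect (D k)) => Dk.
    by have [p [p0 Hp]] := st _ (Hh k Dk); exists p; split.
  by exists 1; split => //; rewrite oner_neq0.
move=> /choice [f Hf].
have [t Ht] := @avoid_roots _ f (fun k => proj1 (Hf k)).
exists (tv i j t * h); split; first by rewrite unitrMr // tv_unit.
move=> k Dk; have := proj2 (Hf k) Dk t (Ht k).
by rewrite /ctv invrM ?tv_unit // tv_inv // !mulrA.
Qed.

Lemma Good_impl F D (P Q : M_ -> Prop) : (forall M, P M -> Q M) -> Good F D P -> Good F D Q.
Proof. by move=> PQ [h [hu Hh]]; exists h; split => // k Dk; apply/PQ/Hh. Qed.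

Lemma Good_loop F D (Inv : nat -> M_ -> Prop) lo m :
  (forall k, (lo <= k < lo + m)%N -> exists i j, i != j /\ good_step (Inv k) (Inv k.+1) i j) ->
  Good F D (Inv lo) -> Good F D (Inv (lo + m)%N).
Proof.
elim: m => [|m IH] st G0; first by rewrite addn0.
have G1 : Good F D (Inv (lo + m)%N).
  by apply: IH => // k /andP[k1 k2]; apply: st; rewrite k1 /= addnS ltnS ltnW.
have [|i [j [ij sij]]] := st (lo + m)%N; first by rewrite leq_addr /= addnS ltnS.
by rewrite addnS; exact: Good_step ij sij G1.
Qed.


Lemma nz_impl i j (M : M_) (Q1 Q2 : M_ -> Prop) :
  (exists p : {poly R}, p != 0 /\ forall t, p.[t] != 0 -> Q1 (ctv i j t M)) ->
  (forall M', Q1 M' -> Q2 M') ->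
  exists p : {poly R}, p != 0 /\ forall t, p.[t] != 0 -> Q2 (ctv i j t M).
Proof. by move=> [p [p0 Hp]] H; exists p; split => // t /Hp /H. Qed.

Definition ent a b (M : M_) := M a b != 0.

Definition nonscalar (M : M_) := forall c : R, M != c%:M.

Definition Inv2 (k : nat) (M : M_) :=
  M ord0 ord_max != 0 \/ exists b : 'I_n.+1, (k <= b)%N /\ b != ord_max /\ M ord0 b != 0.

Definition Inv1 (k : nat) (M : M_) :=
  (exists b : 'I_n.+1, b != ord0 /\ M ord0 b != 0) \/
  (exists a b : 'I_n.+1, (k <= a)%N /\ a != b /\ M a b != 0) \/
  ((forall a b : 'I_n.+1, a != b -> M a b = 0) /\
    exists a : 'I_n.+1, (k <= a)%N /\ M a a != M ord0 ord0).

Ltac U := (try rewrite /Inv1); (try rewrite /Inv2).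

Lemma neq0_gt (b : 'I_n.+1) : (b != ord0) = (0 < b)%N.
Proof. by rewrite lt0n; congr negb; apply/eqP/eqP => [->|h] //; apply: val_inj. Qed.

Lemma inv1_init (M : M_) : nonscalar M -> Inv1 1 M.
Proof.
move=> ns.
case: (pselect (exists a b : 'I_n.+1, a != b /\ M a b != 0)) => [[a [b [ab Mab]]]|nd].
  have [a0|a0] := eqVneq a ord0.
    by U; left; exists b; rewrite -a0 eq_sym; split.
  by U; right; left; exists a, b; split => //; rewrite -neq0_gt.
U; right; right; split.
  move=> a b ab; apply/eqP; apply: contrapT => Mab; apply: nd; exists a, b; split => //.
  exact/negP.
apply: contrapT => H; apply/(negP (ns (M ord0 ord0)))/eqP/matrixP => a b.
rewrite mxE; have [->|ab] := eqVneq a b.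
  have [->|] := eqVneq b ord0; first by rewrite ?eqxx ?mulr1n.
  rewrite neq0_gt => b0; apply/eqP; apply: contrapT => Mbb; apply: H; exists b; split => //.
  exact/negP.
rewrite mulr0n; apply/eqP; apply: contrapT => Mab; apply: nd; exists a, b.
split => //; exact/negP.
Qed.

Lemma inv1_end (M : M_) : Inv1 n.+1 M -> exists b : 'I_n.+1, b != ord0 /\ M ord0 b != 0.
Proof.
case=> [//|[[a [b [ka _]]]|[_ [a [ka _]]]]]; by move: (ltn_ord a); rewrite ltnNge ka.
Qed.

Lemma diag_fix j t (M : M_) : ord0 != j -> (forall a b : 'I_n.+1, a != b -> M a b = 0) ->
  M j j = M ord0 ord0 -> forall a b, ctv ord0 j t M a b = M a b.
Proof.
move=> j0 dM Mjj a b; rewrite ctv_entry //.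
have -> : M j ord0 = 0 by apply: dM; rewrite eq_sym.
rewrite !mulr0 !mul0r oppr0 mul0r addr0.
suff -> : (a == ord0)%:R * M j b - M a ord0 * (b == j)%:R = 0 by rewrite mul0r addr0.
have [->|a0] := eqVneq a ord0; have [->|bj] := eqVneq b j.
- by rewrite Mjj mul1r mulr1 subrr.
- by rewrite (dM j b) ?mulr0 ?subrr // eq_sym.
- by rewrite (dM a ord0) // !mul0r subrr.
- by rewrite mul0r mulr0 subrr.
Qed.

Lemma inv1_step k : (1 <= k < 1 + n)%N -> exists i j : 'I_n.+1, i != j /\ good_step (Inv1 k) (Inv1 k.+1) i j.
Proof.
move=> /andP[k1 kn]; have kn' : (k < n.+1)%N by rewrite add1n in kn.
set j : 'I_n.+1 := inord k.
have hj : nat_of_ord j = k by rewrite inordK.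
have j0 : ord0 != j by rewrite eq_sym neq0_gt hj.
exists ord0, j; split => // M [[b [b0 Mb]] | [[a [b [ka [ab Mab]]]] | [dM [a [ka Maa]]]]].
- apply: (nz_impl _ _ _ (ent ord0 b) _ (entry_nz _ _ M ord0 b j0 _) _); first by rewrite Mb.
  by move=> M' H; U; left; exists b; split.
- have [aj|aj] := eqVneq a j.
    have [b0|b0] := eqVneq b ord0.
      apply: (nz_impl _ _ _ (ent ord0 j) _ (entry_nz _ _ M ord0 j j0 _) _).
        by rewrite !eqxx /= ?mulr1n !mul1r !mulr1 oppr_eq0 -aj -b0 Mab !orbT.
      by move=> M' H; U; left; exists j; split => //; rewrite eq_sym.
    apply: (nz_impl _ _ _ (ent ord0 b) _ (entry_nz _ _ M ord0 b j0 _) _).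
      have bj : (b == j) = false by apply/negbTE; rewrite -aj eq_sym.
      by rewrite eqxx bj mul1r mulr0 subr0 -aj Mab orbT.
    by move=> M' H; U; left; exists b; split.
  have ka' : (k < a)%N by rewrite ltn_neqAle ka andbT -hj; apply: contra aj => /eqP h; apply/eqP/val_inj.
  apply: (nz_impl _ _ _ (ent a b) _ (entry_nz _ _ M a b j0 _) _); first by rewrite Mab.
  by move=> M' H; U; right; left; exists a, b; split => //; split.
- have [Mjj|Mjj] := eqVneq (M j j) (M ord0 ord0); last first.
    apply: (nz_impl _ _ _ (ent ord0 j) _ (entry_nz _ _ M ord0 j j0 _) _).
      by rewrite !eqxx mul1r mulr1 subr_eq0 Mjj orbT.
    by move=> M' H; U; left; exists j; split => //; rewrite eq_sym.
  have aj : a != j by apply: contraNneq Maa => ->; rewrite Mjj.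
  have ka' : (k < a)%N by rewrite ltn_neqAle ka andbT -hj; apply: contra aj => /eqP h; apply/eqP/val_inj.
  exists 1; split; first by rewrite oner_neq0.
  move=> t _; U; right; right; split.
    by move=> a' b' ab'; rewrite (diag_fix _ t _ j0 dM Mjj); apply: dM.
  by exists a; rewrite !(diag_fix _ t _ j0 dM Mjj); split.
Qed.

Lemma inv2_init (M : M_) : (exists b : 'I_n.+1, b != ord0 /\ M ord0 b != 0) -> Inv2 1 M.
Proof.
move=> [b [b0 Mb]]; have [bn|bn] := eqVneq b ord_max; first by U; left; rewrite -bn.
by U; right; exists b; rewrite -neq0_gt.
Qed.

Lemma inv2_end (M : M_) : Inv2 n M -> M ord0 ord_max != 0.
Proof.
case=> // [[b [nb [bn _]]]]; case/negP: bn; apply/eqP/val_inj => /=.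
by apply/eqP; rewrite eqn_leq nb -ltnS ltn_ord.
Qed.

Lemma inv2_step k : (1 <= k < 1 + n.-1)%N -> exists i j : 'I_n.+1, i != j /\ good_step (Inv2 k) (Inv2 k.+1) i j.
Proof.
move=> /andP[k1 kn]; have kn' : (k < n)%N.
  by move: kn k1; case: (n) => [|m] /=; lia.
have kn'' : (k < n.+1)%N by rewrite ltnW.
set i : 'I_n.+1 := inord k.
have hi : nat_of_ord i = k by rewrite inordK.
have ij : i != ord_max by rewrite -(inj_eq val_inj) /= hi neq_ltn kn'.
have i0 : (ord0 == i) = false by apply/negbTE; rewrite eq_sym neq0_gt hi.
exists i, ord_max; split => // M [M0n | [b [kb [bn Mb]]]].
- apply: (nz_impl _ _ _ (ent ord0 ord_max) _ (entry_nz _ _ M ord0 ord_max ij _) _); first by rewrite M0n.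
  by move=> M' H; U; left.
- have [bi|bi] := eqVneq b i.
    apply: (nz_impl _ _ _ (ent ord0 ord_max) _ (entry_nz _ _ M ord0 ord_max ij _) _).
      by rewrite i0 eqxx mul0r mulr1 sub0r oppr_eq0 -bi Mb !orbT.
    by move=> M' H; U; left.
  have kb' : (k < b)%N by rewrite ltn_neqAle kb andbT -hi; apply: contra bi => /eqP h; apply/eqP/val_inj.
  apply: (nz_impl _ _ _ (ent ord0 b) _ (entry_nz _ _ M ord0 b ij _) _); first by rewrite Mb.
  by move=> M' H; U; right; exists b; split => //; split.
Qed.

Definition corners (M : M_) :=
  [/\ M ord0 ord0 != 0, M ord0 ord_max != 0, M ord_max ord0 != 0 & M ord_max ord_max != 0].

Hypothesis n0 : (0 < n)%N.

Lemma m0 : (ord0 : 'I_n.+1) != ord_max.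
Proof. by rewrite -(inj_eq val_inj) /= neq_ltn n0. Qed.

Lemma Good_corners F D : (forall k, D k -> nonscalar (F k)) -> Good F D corners.
Proof.
move=> ns.
have G1 : Good F D (Inv1 1).
  by exists 1; split; [exact: unitr1 | move=> k Dk; rewrite invr1 mulr1 mul1r; exact/inv1_init/ns].
have := @Good_loop F D Inv1 1 n (fun k => @inv1_step k) G1; rewrite add1n => G2.
have G3 : Good F D (Inv2 1) by apply: Good_impl G2 => M /inv1_end /inv2_init.
have := @Good_loop F D Inv2 1 n.-1 (fun k => @inv2_step k) G3.
have -> : (1 + n.-1)%N = n by rewrite add1n prednK.
move=> /(@Good_impl F D _ _ (@inv2_end)) G4.
have mo : ord_max != ord0 :> 'I_n.+1 by rewrite eq_sym m0.
have G5 : Good F D (fun M => ent ord0 ord_max M /\ ent ord_max ord0 M).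
  apply: (@Good_step F D _ _ _ _ mo _ G4) => M H; apply: (and_nz _ _ _ (ent ord0 ord_max) (ent ord_max ord0)).
    by apply: (entry_nz _ _ _ _ _ mo); rewrite H.
  by apply: (entry_nz _ _ _ _ _ mo); rewrite !eqxx /= ?mulr1n ?mul1r ?mulr1 oppr_eq0 H !orbT.
have G6 : Good F D (fun M => (ent ord0 ord_max M /\ ent ord_max ord0 M) /\ ent ord0 ord0 M).
  apply: (@Good_step F D _ _ _ _ m0 _ G5) => M [H1 H2]; rewrite /ent in H1 H2.
  apply: (and_nz _ _ _ (fun M => ent ord0 ord_max M /\ ent ord_max ord0 M) (ent ord0 ord0)).
    by apply: (and_nz _ _ _ (ent ord0 ord_max) (ent ord_max ord0)); apply: (entry_nz _ _ _ _ _ m0); rewrite ?H1 ?H2.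
  by apply: (entry_nz _ _ _ _ _ m0); rewrite eqxx (negbTE m0) /= ?mulr1n ?mulr0n ?mul1r ?mulr0 ?subr0 H2 orbT.
have G7 : Good F D (fun M => ((ent ord0 ord_max M /\ ent ord_max ord0 M) /\ ent ord0 ord0 M) /\ ent ord_max ord_max M).
  apply: (@Good_step F D _ _ _ _ mo _ G6) => M [[H1 H2] H3]; rewrite /ent in H1 H2 H3.
  apply: (and_nz _ _ _ (fun M => (ent ord0 ord_max M /\ ent ord_max ord0 M) /\ ent ord0 ord0 M) (ent ord_max ord_max)).
    apply: (and_nz _ _ _ (fun M => ent ord0 ord_max M /\ ent ord_max ord0 M) (ent ord0 ord0)).
      by apply: (and_nz _ _ _ (ent ord0 ord_max) (ent ord_max ord0)); apply: (entry_nz _ _ _ _ _ mo); rewrite ?H1 ?H2.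
    by apply: (entry_nz _ _ _ _ _ mo); rewrite H3.
  by apply: (entry_nz _ _ _ _ _ mo); rewrite eqxx (negbTE mo) /= ?mulr1n ?mulr0n ?mul1r ?mulr0 ?subr0 H1 orbT.
by apply: Good_impl G7 => M [[[? ?] ?] ?]; split.
Qed.

End Mx.

Section Grp.
Variables (G : Type) (mul : G -> G -> G) (one : G) (inv : G -> G).
Hypothesis ga : group_axioms mul one inv.

Local Notation gp := (gpow mul one).

Lemma gpowS g k : gp g k.+1 = mul g (gp g k).
Proof. by []. Qed.

Lemma gpowD g a b : gp g (a + b) = mul (gp g a) (gp g b).
Proof.
elim: a => [|a IH]; first by rewrite add0n /= (gmul1l ga).
by rewrite addSn !gpowS IH (gmulA ga).
Qed.

Lemma invK x : inv (inv x) = x.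
Proof.
rewrite -[inv (inv x)](gmul1r ga) -(gmulVl ga x) (gmulA ga) (gmulVl ga) (gmul1l ga) //.
Qed.

Lemma cancel_one x y : mul x y = x -> y = one.
Proof.
move=> H; have : mul (inv x) (mul x y) = mul (inv x) x by rewrite H.
by rewrite (gmulA ga) (gmulVl ga) (gmul1l ga).
Qed.

Variable S : list G.

Lemma wordlen_ex : generates mul one inv S -> forall x, exists L, is_wordlen mul one inv S x L.
Proof.
move=> gen x; have [m Hm] := gen x.
have ex : exists m, `[< represents mul one inv S x m >] by exists m; apply/asboolP.
case: (ex_minnP ex) => L /asboolP HL Hmin; exists L; split => // m' Hm'.
by apply: Hmin; apply/asboolP.
Qed.

Definition alph := S ++ map inv S.
Local Notation m := (size alph).

Lemma In_nth_seq (s : seq G) x : List.In x s -> exists k, (k < size s)%N /\ nth one s k = x.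
Proof.
elim: s => [//|y s IH] /= [->|/IH [k [ks e]]]; first by exists 0%N.
by exists k.+1.
Qed.

Lemma letter_idx x : letter inv S x -> exists i : 'I_m.+1, nth one alph i = x.
Proof.
case=> [/In_nth_seq [k [ks e]]|/In_nth_seq [k [ks e]]].
  have km : (k < m.+1)%N by rewrite /alph size_cat ltnS ltnW // ltn_addr.
  by exists (Ordinal km); rewrite /= /alph nth_cat ks.
have km : (size S + k < m.+1)%N by rewrite /alph size_cat size_map ltnS ltnW // ltn_add2l.
exists (Ordinal km); rewrite /= /alph nth_cat ltnNge leq_addr /= addKn.
by rewrite (nth_map one) // e invK.
Qed.

Lemma list_idx l : List.Forall (letter inv S) l ->
  exists li : seq 'I_m.+1, map (fun i : 'I_m.+1 => nth one alph i) li = l.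
Proof.
elim: l => [|x l IH] H; first by exists [::].
have [/letter_idx [i ei] Hl] := proj1 (List.Forall_cons_iff _ x l) H.
have [li eli] := IH Hl; exists (i :: li); by rewrite /= ei eli.
Qed.

Definition decode (li : seq 'I_m.+1) := foldr mul one (map (fun i : 'I_m.+1 => nth one alph i) li).

Definition enumG (k : nat) : G :=
  match @unpickle (seq 'I_m.+1) k with Some li => decode li | None => one end.

Lemma enumG_surj : generates mul one inv S -> forall g, exists k, enumG k = g.
Proof.
move=> gen g; have [L [l [_ [Fl el]]]] := gen g.
have [li eli] := list_idx _ Fl.
by exists (pickle li); rewrite /enumG pickleK /decode eli.
Qed.

Lemma finite_ball N : exists (T : finType) (dec : T -> G),
  forall x L, is_wordlen mul one inv S x L -> (L <= N)%N -> exists c, dec c = x.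
Proof.
exists ('I_N.+1 * N.-tuple 'I_m.+1)%type.
exists (fun c : 'I_N.+1 * N.-tuple 'I_m.+1 => decode (take c.1 c.2)).
move=> x L [[l [sl [Fl el]]] _] LN.
have [li eli] := list_idx _ Fl.
have sll : size l = length l by elim: (l) => //= ? ? ->.
have sli : size li = L by rewrite -sl -sll -eli size_map.
have pf : size (li ++ nseq (N - L) ord0) == N by rewrite size_cat size_nseq sli subnKC.
exists (inord L, Tuple pf) => /=.
by rewrite inordK ?ltnS // -sli take_size_cat // /decode eli.
Qed.

End Grp.

Lemma ratio_le1 (R : realType) (n : nat) (b : R) (s : seq R) :
  singular_values_sq (b%:M : 'M[R]_n.+1) s -> Num.sqrt (s`_0) / Num.sqrt (s`_1) <= 1.
Proof.
case=> ss _ cp.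
have AtA : (b%:M)^T *m (b%:M : 'M[R]_n.+1) = (b*b)%:M by rewrite tr_scalar_mx -scalar_mxM.
have cpE : char_poly ((b*b)%:M : 'M[R]_n.+1) = ('X - (b*b)%:P)^+n.+1.
  rewrite /char_poly /char_poly_mx map_scalar_mx /=.
  have -> : ('X%:M - (b * b)%:P%:M : 'M[{poly R}]_n.+1) = ('X - (b*b)%:P)%:M.
    by apply/matrixP => i j; rewrite !mxE mulrnBl.
  by rewrite det_scalar.
have Hr y : y \in s -> y = b * b.
  move=> ys; have := root_prod_XsubC s y; rewrite ys -cp AtA cpE => /rootP.
  by rewrite horner_exp hornerXsubC => /eqP; rewrite expf_eq0 /= subr_eq0 => /eqP.
have e0 : s`_0 = b * b by apply: Hr; rewrite mem_nth // ss.
case: (ltnP 1 (size s)) => h.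
  have e1 : s`_1 = b * b by apply: Hr; rewrite mem_nth.
  rewrite e0 e1; have [->|nz] := eqVneq (Num.sqrt (b * b)) 0; first by rewrite mul0r ler01.
  by rewrite divff.
by rewrite (nth_default _ h) sqrtr0 invr0 mulr0 ler01.
Qed.

Lemma rho_nonscalar (G : Type) (mul : G -> G -> G) (one : G) (inv : G -> G)
  (S : list G) (R : realType) (n : nat) (rho : G -> 'M[R]_n.+1) (w : G) :
  group_axioms mul one inv ->
  generates mul one inv S ->
  torsion_free mul one ->
  representation mul one rho ->
  projective_anosov mul one inv S rho ->
  forall g, ~ in_cyclic mul one inv w g -> nonscalar R n (rho g).
Proof.
move=> ga gen tf [rU [r1 rM]] [C [a [C0 [a0 An]]]] g ng c; apply/negP => /eqP Hc.
have g1 : g <> one by move=> e; apply: ng; exists 0; rewrite e.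
have sc k : exists c', rho (gpow mul one g k) = c'%:M.
  elim: k => [|k [c' e]]; first by exists 1; rewrite r1.
  by exists (c * c'); rewrite gpowS rM Hc e -scalar_mxM.
pose N := (Num.trunc ((C * a)^-1)).+1.
have bound k L : is_wordlen mul one inv S (gpow mul one g k) L -> (L < N)%N.
  move=> wl; have [c' e] := sc k; have [s [sv H]] := An _ _ wl; rewrite e in sv.
  have H1 := le_trans H (ratio_le1 _ _ _ _ sv).
  have H2 := expR_ge1Dx (a * L%:R).
  have H3 : C * (1 + a * L%:R) <= 1 := le_trans (ler_wpM2l (ltW C0) H2) H1.
  have H4 : L%:R <= (C * a)^-1.
    rewrite -[(C * a)^-1]mul1r ler_pdivlMr ?mulr_gt0 //.
    have : 0 <= L%:R :> R by [].
    nra.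
  by rewrite -(ltr_nat R); exact: le_lt_trans H4 (truncnS_gt _).
have [T [dec Hdec]] := @finite_ball _ _ _ _ ga S N.
have ex (k : 'I_#|T|.+1) : exists c0 : T, dec c0 = gpow mul one g k.
  have [L wl] := @wordlen_ex _ _ _ _ S gen (gpow mul one g k).
  exact: (Hdec _ _ wl (ltnW (bound _ _ wl))).
have [f Hf] := choice ex.
have ninj : ~ injective f by move=> /leq_card; rewrite card_ord ltnn.
have [x [y [fxy xy]]] : exists x y, f x = f y /\ x != y.
  apply: contrapT => H; apply: ninj => x y fxy; apply/eqP; apply: contrapT => /negP xy.
  by apply: H; exists x, y.
have exy : gpow mul one g x = gpow mul one g y by rewrite -Hf -Hf fxy.
have key (p q : nat) : (p < q)%N -> gpow mul one g p = gpow mul one g q -> False.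
  move=> pq e; have pos : (0 < (q - p)%N)%N by rewrite subn_gt0.
  have E : gpow mul one g (q - p)%N = one.
    apply: (@cancel_one _ _ _ _ ga (gpow mul one g p)).
    by rewrite -(@gpowD _ _ _ _ ga) (subnKC (ltnW pq)) e.
  exact: (tf g g1 (q - p)%N pos E).
case: (ltngtP x y) => [xy'|yx'|xy']; first exact: key _ _ xy' exy.
  exact: key _ _ yx' (esym exy).
by move/val_inj: xy' xy => ->; rewrite eqxx.
Qed.

(* d = n.+1; the matrix indices 1 and d are ord0 and ord_max *)
Theorem proposition3p1 (G : Type) (mul : G -> G -> G) (one : G) (inv : G -> G)
  (S : list G) (R : realType) (n : nat) (rho : G -> 'M[R]_n.+1) (w : G) :
  group_axioms mul one inv ->
  generates mul one inv S ->
  word_hyperbolic mul one inv S ->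
  torsion_free mul one ->
  maximal_cyclic mul one inv w ->
  representation mul one rho ->
  projective_anosov mul one inv S rho ->
  exists h : 'M[R]_n.+1, h \in unitmx /\
    forall g, ~ in_cyclic mul one inv w g ->
      let M := h *m rho g *m invmx h in
      [/\ M ord0 ord0 != 0, M ord0 ord_max != 0,
          M ord_max ord0 != 0 & M ord_max ord_max != 0].
Proof.
move=> ga gen _ tf _ rep an.
have ns := @rho_nonscalar G mul one inv S R n rho w ga gen tf rep an.
move: rho rep an ns; case: n => [|n] rho rep an ns.
  exists 1%:M; split; first exact: unitmx1.
  move=> g ng; exfalso; apply: (negP (ns g ng (rho g ord0 ord0))).
  by apply/eqP/matrixP => i j; rewrite !ord1 mxE eqxx mulr1n.
pose F := fun k => rho (@enumG G mul one inv S k).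
pose D := fun k => ~ in_cyclic mul one inv w (@enumG G mul one inv S k).
have [h [hu Hh]] := @Good_corners R n.+1 (ltn0Sn n) F D (fun k Dk => ns _ Dk).
exists h; split => // g ng.
have [k ek] := @enumG_surj _ _ _ _ ga S gen g.
have := Hh k; rewrite /D /F ek => /(_ ng) [? ? ? ?].
by split.
Qed.
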